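(* Let $M$ be a monoid. Then $\mathfrak{L}(\mathrm{Val},\mathrm{CF},M^0)=\mathfrak{L}(\mathrm{Val},\mathrm{CF},M)$.
   Context: $M^0=M\cup\{0\}$ (with a new zero element adjoined) if $M$ has no zero element, and $M^0=M$ otherwise. A context-free valence grammar over a monoid $N$ is $(V,T,P,S,N)$ with nonterminals $V$, terminals $T$, start symbol $S$ and a finite set $P$ of rules $(A\to\alpha,n)$ with $A\in V$, $\alpha\in(V\cup T)^*$, $n\in N$. One step: $(w_1Aw_2,m)\Rightarrow(w_1\alpha w_2,mn)$ for a rule $(A\to\alpha,n)$. The generated language is $\{w\in T^*:(S,1)\Rightarrow^*(w,1)\}$. $\mathfrak{L}(\mathrm{Val},\mathrm{CF},N)$ is the family of languages generated by such grammars over $N$. *)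

(* Defs.v *)
From Stdlib Require Import Relations ClassicalDescription List.
From mathcomp Require Import all_boot.

Set Implicit Arguments.
Unset Strict Implicit.
Unset Printing Implicit Defensive.

Record monoid := Monoid {
  mcarrier :> Type;
  mop : mcarrier -> mcarrier -> mcarrier;
  munit : mcarrier;
  mopA : forall x y z, mop x (mop y z) = mop (mop x y) z;
  mop1x : forall x, mop munit x = x;
  mopx1 : forall x, mop x munit = x
}.

Definition is_zero (M : monoid) (z : M) : Prop :=
  forall m : M, mop z m = z /\ mop m z = z.

Definition has_zero (M : monoid) : Prop := exists z : M, is_zero z.

(* M with a new zero adjoined: None is the new zero. *)
Definition adj_op (M : monoid) (x y : option M) : option M :=
  match x, y with
  | Some a, Some b => Some (mop a b)
  | _, _ => None
  end.

Lemma adj_opA (M : monoid) (x y z : option M) :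
  adj_op x (adj_op y z) = adj_op (adj_op x y) z.
Proof. by case: x => [a|]; case: y => [b|]; case: z => [c|] //=; rewrite mopA. Qed.

Lemma adj_op1x (M : monoid) (x : option M) : adj_op (Some (munit M)) x = x.
Proof. by case: x => [a|] //=; rewrite mop1x. Qed.

Lemma adj_opx1 (M : monoid) (x : option M) : adj_op x (Some (munit M)) = x.
Proof. by case: x => [a|] //=; rewrite mopx1. Qed.

Definition adjoin_zero (M : monoid) : monoid :=
  @Monoid (option M) (@adj_op M) (Some (munit M))
    (@adj_opA M) (@adj_op1x M) (@adj_opx1 M).

Definition monoid0 (M : monoid) : monoid :=
  if excluded_middle_informative (has_zero M) then M else adjoin_zero M.

(* Context-free valence grammar (V, T, P, S, N): nonterminals V (finite),
   terminals T (finite), finite list of rules (A -> alpha, n), start S. *)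
Record valence_grammar (N : monoid) (T : finType) := VGrammar {
  vg_V : finType;
  vg_P : list (vg_V * list (vg_V + T) * N);
  vg_S : vg_V
}.

Definition vg_step (N : monoid) (T : finType) (G : valence_grammar N T)
    (c c' : list (vg_V G + T) * N) : Prop :=
  exists (A : vg_V G) (alpha : list (vg_V G + T)) (n : N)
         (w1 w2 : list (vg_V G + T)),
    In (A, alpha, n) (vg_P G) /\
    c = (w1 ++ inl A :: w2, c.2) /\
    c' = (w1 ++ alpha ++ w2, mop c.2 n).

Definition vg_derives (N : monoid) (T : finType) (G : valence_grammar N T)
    (c c' : list (vg_V G + T) * N) : Prop :=
  clos_refl_trans _ (@vg_step N T G) c c'.
Arguments vg_derives {N T} G c c'.

Definition vg_lang (N : monoid) (T : finType) (G : valence_grammar N T)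
    (w : list T) : Prop :=
  vg_derives G ([:: inl (vg_S G)], munit N) (map inr w, munit N).

Definition in_Val_CF (N : monoid) (T : finType) (L : list T -> Prop) : Prop :=
  exists G : valence_grammar N T, forall w, L w <-> vg_lang G w.

(* Main.v *)
Require Import Defs.
From mathcomp Require Import all_boot.
From Stdlib Require Import Relations ClassicalDescription List.
Set Implicit Arguments.
Unset Strict Implicit.

Fixpoint drop0 {V T : Type} {M : monoid} (P : list (V * list (V + T) * option M))
  : list (V * list (V + T) * M) :=
  match P with
  | nil => nil
  | (A, alpha, Some n) :: P' => (A, alpha, n) :: drop0 P'
  | (_, _, None) :: P' => drop0 P'
  end.

Lemma In_drop0 {V T : Type} {M : monoid} (P : list (V * list (V + T) * option M)) A alpha n :
  In (A, alpha, Some n) P -> In (A, alpha, n) (drop0 P).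
Proof.
elim: P => [|[[B beta] [k|]] P IH] //= [H|H].
- by case: H => -> -> ->; left.
- by right; apply: IH.
- by [].
- by apply: IH.
Qed.

Definition Gdrop (M : monoid) (T : finType) (G0 : valence_grammar (adjoin_zero M) T)
  : valence_grammar M T := @VGrammar M T (vg_V G0) (drop0 (vg_P G0)) (vg_S G0).

Lemma der_back (M : monoid) (T : finType) (G0 : valence_grammar (adjoin_zero M) T) c c' :
  vg_derives G0 c c' -> forall m', c'.2 = Some m' ->
  exists m, c.2 = Some m /\ vg_derives (Gdrop G0) (c.1, m) (c'.1, m').
Proof.
elim=> {c c'}.
- move=> c d [A [alpha [n [w1 [w2 [Hin [-> ->]]]]]]] /= m'.
  case: c.2 => [a|] //; case: n Hin => [k|] Hin //= [<-].
  exists a; split => //; apply: rt_step.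
  exists A, alpha, k, w1, w2; split; first exact: (In_drop0 Hin).
  by split.
- move=> c m' E; exists m'; split => //; exact: rt_refl.
- move=> x y z _ IH1 _ IH2 m' Hz.
  have [my [Hy Dy]] := IH2 m' Hz.
  have [mx [Hx Dx]] := IH1 my Hy.
  exists mx; split => //; exact: rt_trans Dx Dy.
Qed.

Definition Gsome (M : monoid) (T : finType) (G : valence_grammar M T)
  : valence_grammar (adjoin_zero M) T :=
  @VGrammar (adjoin_zero M) T (vg_V G)
    (map (fun r : vg_V G * list (vg_V G + T) * M => (r.1.1, r.1.2, Some r.2)) (vg_P G))
    (vg_S G).

Lemma der_fwd (M : monoid) (T : finType) (G : valence_grammar M T) c c' :
  vg_derives G c c' ->
  vg_derives (Gsome G) (c.1, Some c.2 : adjoin_zero M) (c'.1, Some c'.2 : adjoin_zero M).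
Proof.
elim=> {c c'}.
- move=> c d [A [alpha [n [w1 [w2 [Hin [-> ->]]]]]]] /=.
  apply: rt_step; exists A, alpha, (Some n : adjoin_zero M), w1, w2; split.
  + exact: (List.in_map (fun r : vg_V G * list (vg_V G + T) * M => (r.1.1, r.1.2, Some r.2)) _ _ Hin).
  + by split.
- move=> c; exact: rt_refl.
- move=> x y z _ IH1 _ IH2; exact: rt_trans IH1 IH2.
Qed.

Lemma In_drop0_inv {V T : Type} {M : monoid} (P : list (V * list (V + T) * option M)) A alpha n :
  In (A, alpha, n) (drop0 P) -> In (A, alpha, Some n) P.
Proof.
elim: P => [|[[B beta] [k|]] P IH] //=.
- case=> [H|H]; first by case: H => -> -> ->; left.
  by right; apply: IH.
- by move=> H; right; apply: IH.
Qed.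

Lemma der_drop_fwd (M : monoid) (T : finType) (G0 : valence_grammar (adjoin_zero M) T) c c' :
  vg_derives (Gdrop G0) c c' ->
  vg_derives G0 (c.1, Some c.2 : adjoin_zero M) (c'.1, Some c'.2 : adjoin_zero M).
Proof.
elim=> {c c'}.
- move=> c d [A [alpha [n [w1 [w2 [Hin [-> ->]]]]]]] /=.
  apply: rt_step; exists A, alpha, (Some n : adjoin_zero M), w1, w2; split.
  + exact: (In_drop0_inv Hin).
  + by split.
- move=> c; exact: rt_refl.
- move=> x y z _ IH1 _ IH2; exact: rt_trans IH1 IH2.
Qed.

Lemma In_map_some {V T : Type} {M : monoid} (P : list (V * list (V + T) * M)) A alpha k :
  In (A, alpha, Some k) (map (fun r : V * list (V + T) * M => (r.1.1, r.1.2, Some r.2)) P) ->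
  In (A, alpha, k) P.
Proof.
elim: P => [|[[B beta] m] P IH] //= [H|H].
- by case: H => -> -> ->; left.
- by right; apply: IH.
Qed.

Lemma der_some_back (M : monoid) (T : finType) (G : valence_grammar M T) c c' :
  vg_derives (Gsome G) c c' -> forall m', c'.2 = Some m' ->
  exists m, c.2 = Some m /\ vg_derives G (c.1, m) (c'.1, m').
Proof.
elim=> {c c'}.
- move=> c d [A [alpha [n [w1 [w2 [Hin [-> ->]]]]]]] /= m'.
  case: c.2 => [a|] //; case: n Hin => [k|] Hin //= [<-].
  exists a; split => //; apply: rt_step.
  exists A, alpha, k, w1, w2; split; first exact: (In_map_some Hin).
  by split.
- move=> c m' E; exists m'; split => //; exact: rt_refl.
- move=> x y z _ IH1 _ IH2 m' Hz.
  have [my [Hy Dy]] := IH2 m' Hz.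
  have [mx [Hx Dx]] := IH1 my Hy.
  exists mx; split => //; exact: rt_trans Dx Dy.
Qed.

Theorem proposition4 (M : monoid) :
  forall (T : finType) (L : list T -> Prop),
    in_Val_CF (monoid0 M) L <-> in_Val_CF M L.
Proof.
move=> T L; rewrite /monoid0; destruct (excluded_middle_informative (has_zero M)) as [H|H]; first by []. simpl.
split.
- move=> [G0 HG]; exists (Gdrop G0) => w; rewrite HG; split.
  + move=> D; have [m [/= [<-] D']] := der_back D (erefl _); exact: D'.
  + move=> D; exact: (der_drop_fwd D).
- move=> [G HG]; exists (Gsome G) => w; rewrite HG; split.
  + move=> D; exact: (der_fwd D).
  + move=> D; have [m [/= [<-] D']] := der_some_back D (erefl _); exact: D'.
Qed.
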